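(* Let $k\ge2$ be an integer, and let $G$ be a graph whose anticonnected components have size less than $|G|/k$. Then there is a complete $(k,|G|/k^2)$-blockade in $G$.
   Context: Graphs are finite and simple; $|G|$ is the number of vertices of $G$ and $\overline G$ its complement. $G$ is anticonnected if $\overline G$ is connected; an induced subgraph $F$ of $G$ is an anticonnected component of $G$ if $\overline F$ is a connected component of $\overline G$. A blockade in $G$ is a sequence $(B_1,\ldots,B_m)$ of disjoint subsets of $V(G)$, with length $m$ and width $\min_i|B_i|$; a $(k,w)$-blockade has length at least $k$ and width at least $w$. A blockade is complete in $G$ if for all distinct $i,j$, every vertex of $B_i$ is adjacent to every vertex of $B_j$. *)

(* Defs.v *)
From mathcomp Require Import all_boot.
Set Implicit Arguments. Unset Strict Implicit. Unset Printing Implicit Defensive.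

Definition simple_graph (T : finType) (e : rel T) : Prop :=
  symmetric e /\ irreflexive e.

Definition compl_rel (T : finType) (e : rel T) : rel T :=
  fun x y => (x != y) && ~~ e x y.

Definition anticomponent (T : finType) (e : rel T) (x : T) : {set T} :=
  [set y | connect (compl_rel e) x y].

Definition blockade (T : finType) (m : nat) (B : 'I_m -> {set T}) : Prop :=
  forall i j : 'I_m, i != j -> [disjoint B i & B j].

Definition complete_blockade (T : finType) (e : rel T) (m : nat)
    (B : 'I_m -> {set T}) : Prop :=
  forall i j : 'I_m, i != j -> forall x y, x \in B i -> y \in B j -> e x y.

(* Main.v *)
Require Import Defs.
From mathcomp Require Import all_boot.
From mathcomp Require Import zify.

Section S.
Variables (T : finType) (e : rel T).
Hypothesis esym : symmetric e.

Definition closedU (U : {set T}) :=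
  forall x y, x \in U -> connect (compl_rel e) x y -> y \in U.

Lemma compl_sym : symmetric (compl_rel e).
Proof. by move=> x y; rewrite /compl_rel eq_sym esym. Qed.

Lemma csym : connect_sym (compl_rel e).
Proof. exact: sym_connect_sym compl_sym. Qed.

Lemma closedC U : closedU U -> closedU (~: U).
Proof.
move=> cU x y; rewrite !inE => xU cxy; apply/negP => yU.
by move: xU; rewrite (cU y x yU) // csym.
Qed.

Lemma closedUn U V : closedU U -> closedU V -> closedU (U :|: V).
Proof.
move=> cU cV x y; rewrite !inE => /orP[xU|xV] cxy.
  by rewrite (cU x y).
by rewrite (cV x y) ?orbT.
Qed.

Lemma closed0 : closedU set0.
Proof. by move=> x y; rewrite inE. Qed.

Lemma closedD U x : closedU U -> closedU (U :\: anticomponent e x).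
Proof.
move=> cU y z; rewrite /anticomponent !inE => /andP[ny yU] cyz.
rewrite (cU y z yU cyz) andbT; apply/negP => cxz; case/negP: ny.
by apply: connect_trans cxz _; rewrite csym.
Qed.

Variable k : nat.
Hypothesis small : forall x, k * #|anticomponent e x| < #|T|.

Lemma bin_lemma N : forall U : {set T}, #|U| <= N -> closedU U -> #|T| <= k^2 * #|U| ->
  exists B, [/\ closedU B, B \subset U, #|T| <= k^2 * #|B| &
                k^2 * #|B| <= #|T| + k * #|T|].
Proof.
elim: N => [|N IH] U hN cU hn.
  exists U; split => //.
  by move: hN; rewrite leqn0 => /eqP ->; rewrite muln0.
case: (set_0Vmem U) => [U0|[x xU]].
  by exists U; split => //; rewrite U0 cards0 muln0.
set C := anticomponent e x.
have CU : C \subset U.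
  by apply/subsetP => y; rewrite /C /anticomponent inE => cxy; exact: cU xU cxy.
have xC : x \in C by rewrite /C /anticomponent inE connect0.
have hcard : #|U| = #|U :\: C| + #|C|.
  by rewrite cardsD (setIidPr CU) subnK // subset_leq_card.
have hC := small x.
have C0 : 0 < #|C| by apply/card_gt0P; exists x.
case: (leqP #|T| (k^2 * #|U :\: C|)) => h.
  have hs : #|U :\: C| <= N by lia.
  have [B [cB sB h1 h2]] := IH (U :\: C) hs (@closedD U x cU) h.
  exists B; split => //; apply: subset_trans sB (subsetDl U C).
exists U; split => //.
have : k * (k * #|C|) <= k * #|T| by rewrite leq_mul2l ltnW ?orbT.
move: h; rewrite hcard -mulnn mulnDr -!mulnA.
lia.
Qed.

Lemma build j : j <= k -> exists (f : nat -> {set T}) W,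
  [/\ closedU W, k^2 * #|W| <= j * (#|T| + k * #|T|),
   forall i, i < j -> [/\ closedU (f i), f i \subset W & #|T| <= k^2 * #|f i|] &
   forall i i', i < j -> i' < j -> i != i' -> [disjoint f i & f i']].
Proof.
elim: j => [|j IH] hj.
  exists (fun _ => set0), set0; split => //; first exact: closed0.
  by rewrite cards0 muln0.
have [f [W [cW hW hf hd]]] := IH (ltnW hj).
have hc := cardsC W.
have hU : #|T| <= k^2 * #|~: W|.
  have h1 : j * (#|T| + k * #|T|) <= (k.-1) * (#|T| + k * #|T|)
    by rewrite leq_mul2r; apply/orP; right; lia.
  have h2 : (k.-1) * (#|T| + k * #|T|) + #|T| = k^2 * #|T|.
    case: k hj {h1 IH hW} => // k' _; rewrite -mulnn /= !mulnDr !mulSn !mulnDl !mulnA.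
    lia.
  have h3 : k^2 * #|W| + k^2 * #|~: W| = k^2 * #|T| by rewrite -mulnDr hc.
  lia.
have [B [cB sB h1 h2]] := @bin_lemma #|~: W| (~: W) (leqnn _) (@closedC W cW) hU.
have dBW : [disjoint B & W] by rewrite disjoints_subset.
have hcU : #|W :|: B| = #|W| + #|B|.
  by rewrite cardsU setIC (disjoint_setI0 dBW) cards0 subn0.
exists (fun i => if i == j then B else f i), (W :|: B); split.
- exact: (@closedUn W B).
- rewrite hcU mulnDr mulSn; lia.
- move=> i; rewrite ltnS leq_eqVlt => /orP[/eqP->|hi]; first by rewrite eqxx subsetUr.
  rewrite (ltn_eqF hi); have [c1 c2 c3] := hf i hi; split => //.
  exact: subset_trans c2 (subsetUl W B).
- have spl : forall i, i < j.+1 -> i = j \/ i < j.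
    by move=> i; rewrite ltnS leq_eqVlt => /orP[/eqP|]; auto.
  move=> i i' /spl[->|hi] /spl[->|hi'] nii'.
  + by rewrite eqxx in nii'.
  + rewrite eqxx (ltn_eqF hi'); have [_ c2 _] := hf i' hi'.
    exact: disjointWr c2 dBW.
  + rewrite eqxx (ltn_eqF hi); have [_ c2 _] := hf i hi.
    rewrite disjoint_sym; exact: disjointWr c2 dBW.
  + by rewrite (ltn_eqF hi) (ltn_eqF hi'); apply: hd.
Qed.
End S.

Theorem lemma4p1 (T : finType) (e : rel T) (k : nat) :
  simple_graph e -> 2 <= k ->
  (forall x : T, k * #|anticomponent e x| < #|T|) ->
  exists (m : nat) (B : 'I_m -> {set T}),
    [/\ k <= m, blockade B, complete_blockade e B &
        forall i : 'I_m, #|T| <= k ^ 2 * #|B i| ].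
Proof.
move=> [esym eirr] hk hsmall.
have [f [W [_ _ hf hd]]] := @build T e esym k hsmall k (leqnn k).
exists k, (fun i => f (val i)); split => //.
- move=> i j nij; by apply: hd => //; apply: ltn_ord.
- move=> i j nij x y xi yj.
  have dij : [disjoint f i & f j] by apply: hd => //; apply: ltn_ord.
  apply/negPn/negP => nxy.
  have [ci _ _] := hf i (ltn_ord i).
  have cxy : compl_rel e x y.
    rewrite /compl_rel nxy andbT; apply/eqP => exy; subst y.
    by rewrite (disjointFr dij xi) in yj.
  have := ci x y xi (connect1 cxy).
  by rewrite (disjointFl dij yj).
- by move=> i; have [_ _ ->] := hf i (ltn_ord i).
Qed.
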